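(* Let $G$ be a finite $3$-group with $\psi'(G)>\frac{31}{77}$. Then either $G\simeq \mathcal{C}_{3^t}$ for some integer $t\ge 0$, or $G\simeq \mathcal{C}_3\times\mathcal{C}_3$.
   Context: For a finite group $G$, $\psi(G)=\sum_{x\in G} o(x)$ and $\psi'(G)=\psi(G)/\psi(\mathcal{C}_{|G|})$, where $\mathcal{C}_n$ is the cyclic group of order $n$. *)

(* Defs.v *)
From mathcomp Require Import all_boot all_order all_algebra all_fingroup all_solvable.
Set Implicit Arguments. Unset Strict Implicit. Unset Printing Implicit Defensive.
Import GroupScope.

Definition psi (gT : finGroupType) (G : {set gT}) : nat := \sum_(x in G) #[x].

(* psi of the cyclic group of order n, realized as Z/nZ = {0,...,n-1},
   where the order of i is n / gcd(i, n). *)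
Definition psi_cyc (n : nat) : nat := \sum_(i < n) (n %/ gcdn i n).

(* Main.v *)
Require Import Defs.
From mathcomp Require Import all_boot all_order all_algebra all_fingroup all_solvable.
From mathcomp Require Import zify.
Set Implicit Arguments. Unset Strict Implicit.


Lemma psi_cyc_ge N : N * totient N <= psi_cyc N.
Proof.
rewrite /psi_cyc totient_count_coprime big_mkord big_distrr /=.
apply: leq_sum => i _; rewrite coprime_sym.
have [/eqP -> | _] := boolP (coprime i N); first by rewrite divn1 muln1.
by rewrite muln0.
Qed.

Lemma dvd_pow3 d k : d %| 3 ^ k.+1 -> d != 3 ^ k.+1 -> d <= 3 ^ k.
Proof.
move=> /(dvdn_pfactor _ _ (isT : prime 3)) [m lem ->] ne.
rewrite leq_exp2l //; rewrite leq_eqVlt in lem.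
case/orP: lem => [/eqP Em|//]; by rewrite Em eqxx in ne.
Qed.

Lemma ord_le (gT : finGroupType) (H : {group gT}) k x :
  #|H| = 3 ^ k.+1 -> ~~ (cyclic H)%g -> x \in H -> #[x]%g <= 3 ^ k.
Proof.
move=> cH ncH xH; apply: dvd_pow3; first by rewrite -cH order_dvdG.
apply/eqP => ox; case/negP: ncH; apply/cyclicP; exists x.
apply/eqP; rewrite eq_sym eqEcard cycle_subG xH /= -orderE ox cH leqnn //=.
Qed.

Lemma abZ : (3.-abelem [set: 'Z_3 * 'Z_3])%g.
Proof.
rewrite abelemE //; apply/andP; split.
  apply/centsP => x _ y _.
  case: x y => a b [c d]. rewrite /commute.
  change ((a * c, b * d) = (c * a, d * b))%g. by rewrite (Zp_mulgC a) (Zp_mulgC b).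
apply/exponentP => x _.
have H : forall z : 'Z_3, (z ^+ 3 = 1)%g.
  move=> z; rewrite Zp_expg; apply/val_inj => /=. by rewrite modnMl.
case: x => a b. change ((a ^+ 3, b ^+ 3) = (1, 1))%g. by rewrite !H.
Qed.

Theorem proposition3p4 (gT : finGroupType) (G : {group gT}) :
  (3.-group G)%g ->
  31 * psi_cyc #|G| < 77 * psi G ->
  (exists t : nat, (G \isog Zp (3 ^ t))%g) \/
  (G \isog [set: 'Z_3 * 'Z_3])%g.
Proof.
move=> pG hyp.
have [n Gn] := p_natP pG.
have [cycG | ncycG] := boolP (cyclic G).
  left; exists n; case/cyclicP: cycG => a defG.
  have oa : #[a]%g = (3 ^ n)%N by rewrite /order -defG.
  rewrite defG isog_sym -oa; exact: Zp_isog.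
have : 1 < ('r_3(G))%g.
  by rewrite ltnNge -odd_pgroup_rank1_cyclic // Gn oddX orbT.
case/p_rank_geP => E /pnElemP [sEG abE lE].
have cE : #|E| = 9 by rewrite (card_pgroup (abelem_pgroup abE)) lE.
have ncE : ~~ cyclic E by rewrite (abelem_cyclic abE) lE.
have n2 : 2 <= n.
  have := subset_leq_card sEG; rewrite cE Gn; case: n {Gn} => [|[|k]]; rewrite ?expn0 ?expn1 //.
case: (maximal_exists sEG) => [EG | [M maxM sEM]].
  right; rewrite -EG (isog_abelem_card _ abE); by rewrite abZ cE cardsT card_prod card_ord.
exfalso; move: hyp; apply/negP; rewrite -leqNgt.
have ncM : ~~ cyclic M by apply: contra ncE; apply: cyclicS.
have sMG : M \subset G := proper_sub (maxgroupp maxM).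
have iM := p_maximal_index pG maxM.
have cMM : (#|M| * 3)%N = #|G| by rewrite -iM Lagrange.
move: cMM; case: n n2 Gn => [|[|[|m]]] // _ Gn; rewrite Gn => cMM.
  have := subset_leq_card sEM; rewrite cE.
  have -> : #|M| = 3 by apply/eqP; rewrite -(eqn_pmul2r (isT : 0 < 3)) cMM.
  by [].
have cM : #|M| = 3 ^ m.+2.
  by apply/eqP; rewrite -(eqn_pmul2r (isT : 0 < 3)) cMM expnSr.
have Gm : #|G| = 3 ^ m.+3 by [].
rewrite /psi (big_setID M) /= (setIidPr sMG).
have h1 : \sum_(x in M) #[x]%g <= #|M| * 3 ^ m.+1.
  rewrite -sum_nat_const; apply: leq_sum => x xM; exact: ord_le cM ncM xM.
have h2 : \sum_(x in G :\: M) #[x]%g <= #|G :\: M| * 3 ^ m.+2.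
  rewrite -sum_nat_const; apply: leq_sum => x /setDP [xG _]; exact: ord_le Gm ncycG xG.
have cD : #|G :\: M| = (3 ^ m.+3 - 3 ^ m.+2)%N by rewrite cardsD (setIidPr sMG) Gm cM.
have h3 := psi_cyc_ge (3 ^ m.+3).
rewrite totient_pfactor // in h3.
rewrite cD cM in h1 h2.
move: h1 h2 h3; rewrite !expnS /=; set q := 3 ^ m.
move=> h1 h2 h3; nia.
Qed.
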